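(* Let $r=r(n)\ge3$ and $m=m(n)$ be integers with $r=o(n^{1/2})$ and $1\le m=O(\log(r^{-2}n))$. Let $\mathcal{H}^+_r(n,m)$ be the set of $H\in\mathcal{H}_r(n,m)$ such that: (a) any two edges share at most two vertices; (b) every cluster consists of exactly two edges; (c) any two distinct clusters are vertex-disjoint; (d) there are at most two clusters. Then, as $n\to\infty$, \[ \frac{|\mathcal{H}^+_r(n,m)|}{|\mathcal{H}_r(n,m)|}=1-O\Bigl(\frac{r^6m^2}{n^3}\Bigr). \]
   Context: $\mathcal{H}_r(n,m)$ is the set of $r$-uniform hypergraphs on $[n]$ with exactly $m$ edges. Two edges are linked if they share exactly two vertices; with $G_H$ the graph on the edges of $H$ whose adjacency is linkedness, a cluster of $H$ is the sub-hypergraph formed by the edges of a connected component of $G_H$ with at least two vertices. $\log$ is natural. *)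

(* Defs.v *)
From mathcomp Require Import all_boot.
Set Implicit Arguments. Unset Strict Implicit. Unset Printing Implicit Defensive.

Definition hgraph (n : nat) := {set {set 'I_n}}.

Definition Hrnm (n r m : nat) : {set hgraph n} :=
  [set H : hgraph n | [forall e in H, #|e| == r] && (#|H| == m)].

(* Two edges of H are linked if they share exactly two vertices;
   this is the adjacency relation of the graph G_H on the edges of H. *)
Definition linkedH n (H : hgraph n) : rel {set 'I_n} :=
  fun e f => [&& e \in H, f \in H & #|e :&: f| == 2].

Definition compH n (H : hgraph n) (e : {set 'I_n}) : hgraph n :=
  [set f | connect (linkedH H) e f].

Definition clusters n (H : hgraph n) : {set hgraph n} :=
  [set compH H e | e in H & 2 <= #|compH H e|].

Definition vtx n (C : hgraph n) : {set 'I_n} := \bigcup_(e in C) e.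

Definition Hplus (n r m : nat) : {set hgraph n} :=
  [set H in Hrnm n r m |
    [&& [forall e in H, forall f in H, (e != f) ==> (#|e :&: f| <= 2)],
        [forall C in clusters H, #|C| == 2],
        [forall C1 in clusters H, forall C2 in clusters H,
                     (C1 != C2) ==> [disjoint vtx C1 & vtx C2]]
      & #|clusters H| <= 2]].

(* Main.v *)
Require Import Defs.
From mathcomp Require Import all_boot.
From mathcomp Require Import zify.
Set Implicit Arguments. Unset Strict Implicit. Unset Printing Implicit Defensive.

Lemma bin_ratio k m N : k <= m -> m <= N -> 'C(N-k, m-k) * N^k <= 'C(N,m) * m^k.
Proof.
elim: k => [|k IH] km mN; first by rewrite !subn0 !expn0 !muln1.
have IH' := IH (ltnW km) mN.
set N' := N - k in IH' *; set m' := m - k in IH' *.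
have m'pos : 0 < m' by rewrite /m' subn_gt0.
have N'pos : 0 < N' by rewrite /N' subn_gt0 (leq_trans km mN).
have e1 : N - k.+1 = N'.-1 by rewrite /N' subnS.
have e2 : m - k.+1 = m'.-1 by rewrite /m' subnS.
rewrite e1 e2.
have D := mul_bin_diag N' m'.-1.
rewrite prednK // in D.
have H1 : m' * N <= m * N' by rewrite /m' /N'; nia.
have H2 := leq_mul H1 IH'.
rewrite -(leq_pmul2l N'pos) !expnS.
move: H2 D; set a := 'C(N'.-1, m'.-1); set b := 'C(N', m'); set c := 'C(N, m).
move=> H2 D.
have -> : N' * (a * (N * N ^ k)) = (N' * a) * N * N ^ k by rewrite !mulnA [N' * a * N]mulnC !mulnA.
rewrite D.
apply: (leq_trans _ (leq_trans H2 _)).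
  by apply: eq_leq; lia.
by apply: eq_leq; lia.
Qed.

Section Gen.
Variable T : finType.
Implicit Types A B S : {set T}.

Lemma card_bigcup_le (I : finType) (P : pred I) (F : I -> {set T}) :
  #|\bigcup_(i | P i) F i| <= \sum_(i | P i) #|F i|.
Proof.
elim/big_rec2: _ => [|i n U _ leUn]; first by rewrite cards0.
by rewrite (leq_trans (leq_card_setU _ U).1) ?leq_add2l.
Qed.

Lemma sum_bool (U : finType) (X : {set U}) (p : pred U) :
  \sum_(x in X) (p x : nat) = #|[set x in X | p x]|.
Proof.
rewrite -sum1_card big_mkcond [in RHS]big_mkcond; apply: eq_bigr => x _.
by rewrite inE; case: (x \in X); case: (p x).
Qed.

Lemma cnt_sup A S k : S \subset A ->
  #|[set B : {set T} | [&& B \subset A, #|B| == k & S \subset B]]|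
    <= 'C(#|A| - #|S|, k - #|S|).
Proof.
move=> SA.
set X := [set B : {set T} | _].
rewrite -(cardsDS SA) -cards_draws.
have inj : {in X &, injective (fun B => B :\: S)}.
  move=> B1 B2; rewrite /X !inE => /and3P[_ _ SB1] /and3P[_ _ SB2] E.
  apply/setP => x; have := congr1 (fun Y : {set T} => x \in Y) E; rewrite !inE /=.
  case xS: (x \in S) => /=; last by [].
  by rewrite (subsetP SB1 _ xS) (subsetP SB2 _ xS).
rewrite -(card_in_imset inj); apply: subset_leq_card; apply/subsetP => B'.
case/imsetP => B; rewrite /X inE => /and3P[BA /eqP Bk SB] ->.
by rewrite inE (setSD _ BA) /= cardsDS // Bk.
Qed.

Lemma cnt_ratio A S m : S \subset A ->
  #|[set B : {set T} | [&& B \subset A, #|B| == m & S \subset B]]| * #|A| ^ #|S|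
    <= 'C(#|A|, m) * m ^ #|S|.
Proof.
move=> SA.
case: (boolP ((#|S| <= m) && (m <= #|A|))) => [/andP[Sm mA]|nb].
  apply: leq_trans (bin_ratio Sm mA); rewrite leq_mul2r; apply/orP; right.
  exact: cnt_sup.
suff -> : #|[set B : {set T} | [&& B \subset A, #|B| == m & S \subset B]]| = 0 by [].
apply/eqP; rewrite cards_eq0; apply/eqP/setP => B; rewrite !inE.
apply/negbTE; apply/negP => /and3P[BA /eqP Bm SB]; move/negP: nb; apply.
by rewrite -Bm !subset_leq_card.
Qed.

Fixpoint nsum (R : {set T}) (k : nat) (F : seq T -> nat) : nat :=
  if k is k'.+1 then \sum_(e in R) nsum R k' (fun s => F (e :: s)) else F [::].

Variable R : {set T}.

Lemma nsum_le k (F G : seq T -> nat) :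
  (forall s, size s = k -> all (mem R) s -> F s <= G s) -> nsum R k F <= nsum R k G.
Proof.
elim: k F G => [|k IH] F G H /=; first exact: H.
apply: leq_sum => e eR; apply: IH => s sz al; apply: H => /=; first by rewrite sz.
by rewrite al andbT.
Qed.

Lemma nsum_ge k (F : seq T -> nat) s :
  size s = k -> all (mem R) s -> F s <= nsum R k F.
Proof.
elim: k F s => [|k IH] F s sz al; first by case: s sz al.
case: s sz al => [|e s] //= [sz] /andP[eR al].
apply: leq_trans (IH (fun t => F (e :: t)) s sz al) _.
by rewrite (bigD1 e) //= leq_addr.
Qed.

Lemma nsum_exch (U : finType) (X : {set U}) k (F : U -> seq T -> nat) :
  \sum_(H in X) nsum R k (F H) = nsum R k (fun s => \sum_(H in X) F H s).
Proof.
elim: k F => [|k IH] F //=.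
rewrite exchange_big; apply: eq_bigr => e _.
exact: (IH (fun H s => F H (e :: s))).
Qed.

Lemma nsum_mull k (F : seq T -> nat) c :
  nsum R k F * c = nsum R k (fun s => F s * c).
Proof.
elim: k F => [|k IH] F //=.
rewrite big_distrl; apply: eq_bigr => e _; exact: IH.
Qed.

Definition HR m := [set H : {set T} | H \subset R & #|H| == m].

Lemma prob_step k (P : pred (seq T)) m : (forall s, P s -> uniq s) ->
  (\sum_(H in HR m) nsum R k (fun s => P s && ([set x in s] \subset H))) * #|R| ^ k
    <= nsum R k P * ('C(#|R|, m) * m ^ k).
Proof.
move=> Pu.
rewrite nsum_exch !nsum_mull; apply: nsum_le => s sz al.
case: (boolP (P s)) => Ps; last by rewrite big1 // => H _; rewrite (negbTE Ps).
rewrite mul1n.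
have us := Pu s Ps.
have cS : #|[set x in s]| = k by rewrite cardsE -sz; exact/card_uniqP.
have SR : [set x in s] \subset R.
  by apply/subsetP => x; rewrite inE => xs; move/allP: al => /(_ x xs).
have := cnt_ratio m SR; rewrite cS; apply: leq_trans.
rewrite leq_mul2r; apply/orP; right.
rewrite (@sum_bool _ (HR m) (fun H => [set x in s] \subset H)).
apply: eq_leq; apply: eq_card => H; rewrite !inE andbA //.
Qed.

End Gen.

Lemma bin_le_exp a t : 'C(a, t) <= a ^ t.
Proof.
apply: (@leq_trans (a ^_ t)); first by rewrite -bin_ffact; apply: leq_pmulr; apply: fact_gt0.
elim: t a => [|t IH] a //; rewrite ffactnS expnS leq_mul2l; apply/orP; right.
apply: leq_trans (IH a.-1) _; case: t {IH} => [|t]; first by rewrite !expn0.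
by rewrite leq_exp2r // leq_pred.
Qed.

Lemma sum_const_bound (U : finType) (X : {set U}) (F : U -> nat) c B :
  (forall x, x \in X -> F x * c <= B) -> (\sum_(x in X) F x) * c <= #|X| * B.
Proof.
move=> H; rewrite big_distrl -sum1_card big_distrl /=.
by apply: leq_sum => x xX; rewrite mul1n; apply: H.
Qed.

Lemma sum_ind_mul (U : finType) (X : {set U}) (a : pred U) (G : U -> nat) c d M D :
  (forall x, x \in X -> a x -> G x * c <= M) ->
  (\sum_(x in X) (a x : nat)) * d <= D ->
  (\sum_(x in X) a x * G x) * (c * d) <= M * D.
Proof.
move=> H1 H2.
apply: (@leq_trans ((\sum_(x in X) (a x : nat) * M) * d)).
  rewrite mulnA leq_mul2r; apply/orP; right.
  rewrite big_distrl; apply: leq_sum => x xX.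
  by case: (boolP (a x)) => ax; rewrite ?mul0n // !mul1n; apply: H1.
rewrite -big_distrl /=.
by rewrite mulnAC mulnC leq_mul2l H2 orbT.
Qed.

Lemma mul_sumr (U : finType) (X : {set U}) (F : U -> nat) c :
  c * \sum_(x in X) F x = \sum_(x in X) c * F x.
Proof. by rewrite big_distrr. Qed.

Lemma sum2_mulr (U : finType) (X : {set U}) (F : U -> U -> nat) c :
  \sum_(x in X) \sum_(y in X) F x y * c = (\sum_(x in X) \sum_(y in X) F x y) * c.
Proof. rewrite big_distrl; apply: eq_bigr => x _; by rewrite big_distrl. Qed.

Section Hyp.
Variables n r : nat.
Notation E := {set 'I_n}.
Definition Rr : {set E} := [set e : E | #|e| == r].
Notation N := 'C(n, r).

Lemma card_Rr : #|Rr| = N.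
Proof. by rewrite card_draws card_ord. Qed.

Lemma contain_bound (T0 : E) :
  #|[set f in Rr | T0 \subset f]| * n ^ #|T0| <= N * r ^ #|T0|.
Proof.
have := @cnt_ratio _ [set: 'I_n] T0 r (subsetT _); rewrite cardsT card_ord.
apply: leq_trans; apply: eq_leq; congr (_ * _); apply: eq_card => f.
by rewrite !inE subsetT.
Qed.

Lemma L_bound (A : E) t :
  #|[set f in Rr | t <= #|A :&: f|]| * n ^ t <= 'C(#|A|, t) * (N * r ^ t).
Proof.
set Ts := [set T0 : E | T0 \subset A & #|T0| == t].
have sub : [set f in Rr | t <= #|A :&: f|] \subset
           \bigcup_(T0 in Ts) [set f in Rr | T0 \subset f].
  apply/subsetP => f; rewrite inE => /andP[fR tf].
  have : 0 < #|[set T0 : E | T0 \subset A :&: f & #|T0| == t]|.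
    by rewrite cards_draws bin_gt0.
  rewrite card_gt0 => /set0Pn[T0]; rewrite inE => /andP[T0Af /eqP T0t].
  apply/bigcupP; exists T0.
    by rewrite inE T0t eqxx andbT (subset_trans T0Af (subsetIl _ _)).
  by rewrite inE fR (subset_trans T0Af (subsetIr _ _)).
apply: leq_trans (leq_mul (subset_leq_card sub) (leqnn _)) _.
apply: leq_trans (leq_mul (card_bigcup_le _ _) (leqnn _)) _.
rewrite -(cards_draws A t) -/Ts.
apply: sum_const_bound => T0; rewrite inE => /andP[_ /eqP <-].
exact: contain_bound.
Qed.

Lemma inner_bound (A : E) t :
  (\sum_(f in Rr) (t <= #|A :&: f| : nat)) * n ^ t <= 'C(#|A|, t) * (N * r ^ t).
Proof. by rewrite (@sum_bool _ Rr (fun f => t <= #|A :&: f|)); exact: L_bound. Qed.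

Lemma M2_bound (e : E) : e \in Rr ->
  (\sum_(f in Rr) (2 <= #|e :&: f| : nat)) * n ^ 2 <= r ^ 2 * (N * r ^ 2).
Proof.
rewrite inE => /eqP er; apply: leq_trans (inner_bound e 2) _.
by rewrite er leq_mul2r bin_le_exp orbT.
Qed.

Definition PA (s : seq E) : bool :=
  if s is [:: e; f] then uniq s && (3 <= #|e :&: f|) else false.
Definition PB (s : seq E) : bool :=
  if s is [:: e; f; g] then [&& uniq s, #|e :&: f| == 2 & #|f :&: g| == 2] else false.
Definition PC (s : seq E) : bool :=
  if s is [:: e1; e2; e3; e4] then
    [&& uniq s, #|e1 :&: e2| == 2, #|e3 :&: e4| == 2 & 0 < #|(e1 :|: e2) :&: e3|]
  else false.
Definition PD (s : seq E) : bool :=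
  if s is [:: e1; e2; e3; e4; e5; e6] then
    [&& uniq s, #|e1 :&: e2| == 2, #|e3 :&: e4| == 2 & #|e5 :&: e6| == 2]
  else false.

Lemma nA_bound : nsum Rr 2 PA * n ^ 3 <= N * (r ^ 3 * (N * r ^ 3)).
Proof.
apply: (@leq_trans ((\sum_(e in Rr) \sum_(f in Rr) (3 <= #|e :&: f| : nat)) * n ^ 3)).
  rewrite leq_mul2r; apply/orP; right; rewrite /=.
  apply: leq_sum => e _; apply: leq_sum => f _.
  by rewrite /PA; case: (3 <= _); rewrite ?andbT ?andbF // leq_b1.
rewrite -{1}card_Rr; apply: sum_const_bound => e; rewrite inE => /eqP er.
apply: leq_trans (inner_bound e 3) _.
by rewrite er leq_mul2r bin_le_exp orbT.
Qed.

Lemma nB_bound : nsum Rr 3 PB * (n ^ 2 * n ^ 2) <=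
  N * ((r ^ 2 * (N * r ^ 2)) * (r ^ 2 * (N * r ^ 2))).
Proof.
apply: (@leq_trans ((\sum_(e in Rr) \sum_(f in Rr) (2 <= #|e :&: f| : nat) *
   \sum_(g in Rr) (2 <= #|f :&: g| : nat)) * (n ^ 2 * n ^ 2))).
  rewrite leq_mul2r; apply/orP; right; rewrite /=.
  apply: leq_sum => e _; apply: leq_sum => f _; rewrite mul_sumr; apply: leq_sum => g _.
  by rewrite /PB; case: (boolP [&& _, _ & _]) => // /and3P[_ /eqP -> /eqP ->].
rewrite -{1}card_Rr; apply: sum_const_bound => e eR.
apply: sum_ind_mul => [f fR _|]; exact: M2_bound.
Qed.

Lemma nC_bound : nsum Rr 4 PC * ((n ^ 2 * n ^ 1) * n ^ 2) <=
  N * (((r ^ 2 * (N * r ^ 2)) * (2 * r * (N * r ^ 1))) * (r ^ 2 * (N * r ^ 2))).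
Proof.
apply: (@leq_trans ((\sum_(e1 in Rr) \sum_(e2 in Rr) (2 <= #|e1 :&: e2| : nat) *
   \sum_(e3 in Rr) (1 <= #|(e1 :|: e2) :&: e3| : nat) *
   \sum_(e4 in Rr) (2 <= #|e3 :&: e4| : nat)) * ((n ^ 2 * n ^ 1) * n ^ 2))).
  rewrite leq_mul2r; apply/orP; right; rewrite /=.
  apply: leq_sum => e1 _; apply: leq_sum => e2 _; rewrite mul_sumr; apply: leq_sum => e3 _.
  rewrite mulnA mul_sumr; apply: leq_sum => e4 _.
  rewrite /PC; case: (boolP [&& _, _, _ & _]) => // /and4P[_ /eqP -> /eqP -> ->].
  by [].
rewrite -{1}card_Rr; apply: sum_const_bound => e1 e1R.
apply: sum_ind_mul => [e2 e2R _|]; last exact: M2_bound.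
apply: sum_ind_mul => [e3 e3R _|]; first exact: M2_bound.
apply: leq_trans (inner_bound _ 1) _.
rewrite bin1 leq_mul2r; apply/orP; right.
apply: leq_trans (leq_card_setU _ _).1 _.
by move: e1R e2R; rewrite !inE => /eqP -> /eqP ->; rewrite addnn -mul2n.
Qed.

Lemma W_bound : (\sum_(e in Rr) \sum_(f in Rr) (2 <= #|e :&: f| : nat)) * n ^ 2
  <= N * (r ^ 2 * (N * r ^ 2)).
Proof. rewrite -{1}card_Rr; apply: sum_const_bound => e eR; exact: M2_bound. Qed.

Lemma nD_bound : nsum Rr 6 PD * (n ^ 2 * (n ^ 2 * n ^ 2)) <=
  (N * (r ^ 2 * (N * r ^ 2))) * ((N * (r ^ 2 * (N * r ^ 2))) * (N * (r ^ 2 * (N * r ^ 2)))).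
Proof.
set W := \sum_(e in Rr) \sum_(f in Rr) (2 <= #|e :&: f| : nat).
apply: (@leq_trans ((W * (W * W)) * (n ^ 2 * (n ^ 2 * n ^ 2)))); last first.
  rewrite mulnACA; apply: leq_mul; first exact: W_bound.
  rewrite mulnACA; apply: leq_mul; exact: W_bound.
rewrite leq_mul2r; apply/orP; right.
apply: (@leq_trans (\sum_(e1 in Rr) \sum_(e2 in Rr) (2 <= #|e1 :&: e2| : nat) *
   (\sum_(e3 in Rr) \sum_(e4 in Rr) (2 <= #|e3 :&: e4| : nat) * W))); last first.
  by rewrite !sum2_mulr.
rewrite /=.
apply: leq_sum => e1 _; apply: leq_sum => e2 _; rewrite mul_sumr; apply: leq_sum => e3 _.
rewrite mul_sumr; apply: leq_sum => e4 _.
rewrite /W mulnA mul_sumr; apply: leq_sum => e5 _.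
rewrite mul_sumr; apply: leq_sum => e6 _.
rewrite /PD; case: (boolP [&& _, _, _ & _]) => // /and4P[_ /eqP -> /eqP -> /eqP ->].
by [].
Qed.

End Hyp.

Section Struct.
Variables n r m : nat.
Hypothesis hr : 3 <= r.
Variable H : hgraph n.
Hypothesis HH : H \in Hrnm n r m.

Lemma eH e : e \in H -> #|e| = r.
Proof. by move: HH; rewrite inE => /andP[/forall_inP h _] /h /eqP. Qed.

Lemma lk_neq e f : linkedH H e f -> e != f.
Proof.
case/and3P => eH' _ c2; apply/eqP => ef; move: c2; rewrite -ef setIid (eH eH').
by case: r hr => [|[|[|r']]].
Qed.

Lemma lk_sym : symmetric (linkedH H).
Proof. by move=> e f; rewrite /linkedH setIC andbCA. Qed.

Lemma csym : connect_sym (linkedH H).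
Proof. exact: sym_connect_sym lk_sym. Qed.

Lemma compE g e : g \in compH H e -> compH H g = compH H e.
Proof.
rewrite inE => eg; apply/setP => x; rewrite !inE; apply/idP/idP => [gx|ex].
  exact: connect_trans eg gx.
by apply: connect_trans ex; rewrite csym.
Qed.

Lemma comp_inter x a b : x \in compH H a -> x \in compH H b -> compH H a = compH H b.
Proof. by move=> /compE <- /compE <-. Qed.

Lemma neq_of x y a b : x \in compH H a -> y \in compH H b ->
  compH H a != compH H b -> x != y.
Proof. move=> xa yb; apply: contra => /eqP exy; subst; by rewrite (comp_inter xa yb). Qed.

Lemma witness k (P : pred (seq {set 'I_n})) s :
  size s = k -> all (mem H) s -> P s ->
  0 < nsum (Rr n r) k (fun s => P s && ([set x in s] \subset H)).
Proof.
move=> sz al Ps; apply: leq_trans (nsum_ge _ sz _) => /=.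
  rewrite Ps lt0b; apply/subsetP => x; rewrite inE => xs.
  by move/allP: al => /(_ x xs).
apply/allP => x xs; move/allP: al => /(_ x xs) xH.
suff: x \in Rr n r by []. by rewrite inE (eH xH).
Qed.

Definition cX k (P : pred (seq {set 'I_n})) :=
  nsum (Rr n r) k (fun s => P s && ([set x in s] \subset H)).

Lemma noX k P : cX k P = 0 -> forall s, size s = k -> all (mem H) s -> ~~ P s.
Proof.
move=> c0 s sz al; apply/negP => Ps; have := witness sz al Ps.
by rewrite -/(cX k P) c0.
Qed.

Section NoB.
Hypothesis noB : forall s, size s = 3 -> all (mem H) s -> ~~ PB s.

Lemma key e f : linkedH H e f -> compH H e = [set e; f].
Proof.
move=> lef; have /and3P[eH' fH' ef2] := lef.
apply/setP => g; rewrite inE; apply/idP/idP => [eg|]; last first.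
  rewrite !inE => /orP[/eqP ->|/eqP ->]; [exact: connect0 | exact: connect1].
have cl : closed (linkedH H) (mem [set e; f]).
  apply: (intro_closed csym) => x y lxy; rewrite !inE => xef.
  apply/negPn/negP; rewrite negb_or => /andP[ye yf].
  have /and3P[xH yH xy2] := lxy.
  have nxy := lk_neq lxy.
  have nef := lk_neq lef.
  case/orP: xef => /eqP xe; subst x.
    have := noB (s := [:: f; e; y]) erefl; rewrite /= fH' eH' yH /= => /(_ isT).
    by rewrite /= !inE negb_or eq_sym nef eq_sym yf eq_sym ye setIC ef2 xy2.
  have := noB (s := [:: e; f; y]) erefl; rewrite /= fH' eH' yH /= => /(_ isT).
  by rewrite /= !inE negb_or nef eq_sym ye eq_sym yf ef2 xy2.
have := closed_connect cl eg; by rewrite !inE eqxx /= => <-.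
Qed.

Lemma cluster_form C : C \in clusters H ->
  exists e f, [/\ linkedH H e f, C = compH H e & C = [set e; f]].
Proof.
case/imsetP => e; rewrite inE => /andP[eH' c2] ->.
have : 0 < #|compH H e :\ e|.
  move: c2; rewrite (cardsD1 e) inE connect0 /= add1n ltnS //.
rewrite card_gt0 => /set0Pn[g]; rewrite !inE => /andP[ge eg].
case/connectP: eg => p pp gl.
case: p pp gl => [|f p] /=; first by move=> _ gee; rewrite gee eqxx in ge.
case/andP => lef _ _; exists e, f; split => //; exact: key.
Qed.

End NoB.

Lemma bad_witness : H \notin Hplus n r m ->
  0 < cX 2 (@PA n) + cX 3 (@PB n) + cX 4 (@PC n) + cX 6 (@PD n).
Proof.
rewrite lt0n; apply: contraR; rewrite negbK !addn_eq0 => /andP[/andP[/andP[/eqP a0 /eqP b0] /eqP c0] /eqP d0].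
have noA := noX a0; have noB := noX b0; have noC := noX c0; have noD := noX d0.
rewrite inE HH /=; apply/and4P; split.
- apply/forall_inP => e eH'; apply/forall_inP => f fH'; apply/implyP => ef.
  rewrite leqNgt; apply/negP => lt.
  have := noA [:: e; f] erefl; rewrite /= eH' fH' /= => /(_ isT).
  by rewrite /= !inE ef lt.
- apply/forall_inP => C /(cluster_form noB) [e [f [lef _ ->]]].
  by rewrite cards2 (lk_neq lef).
- apply/forall_inP => C1 /(cluster_form noB) [e1 [e2 [l12 C1e C1s]]].
  apply/forall_inP => C2 /(cluster_form noB) [e3 [e4 [l34 C2e C2s]]].
  apply/implyP => C12; rewrite -setI_eq0; apply: contraR C12 => /set0Pn[x /setIP[x1 x2]].
  have e3C2 : e3 \in C2 by rewrite C2s !inE eqxx.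
  have e4C2 : e4 \in C2 by rewrite C2s !inE eqxx orbT.
  case e3C1 : (e3 \in C1).
    have h : e3 \in compH H e1 by rewrite -C1e e3C1.
    by rewrite C1e C2e (compE h).
  case e4C1 : (e4 \in C1).
    have h1 : e4 \in compH H e1 by rewrite -C1e e4C1.
    have h2 : e4 \in compH H e3 by rewrite -C2e e4C2.
    by rewrite C1e C2e (comp_inter h1 h2).
  move: e3C1 e4C1; rewrite C1s !inE => /negbT; rewrite negb_or => /andP[n31 n32].
  move=> /negbT; rewrite negb_or => /andP[n41 n42].
  have /and3P[e1H e2H c12] := l12; have /and3P[e3H e4H c34] := l34.
  have n12 := lk_neq l12; have n34 := lk_neq l34.
  have x12 : x \in e1 :|: e2.
    move/bigcupP: x1 => [e]; rewrite C1s !inE => /orP[/eqP->|/eqP->] xe;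
    by rewrite xe ?orbT.
  move/bigcupP: x2 => [e]; rewrite C2s !inE => /orP[/eqP->|/eqP->] xe.
    have := noC [:: e1; e2; e3; e4] erefl; rewrite /= e1H e2H e3H e4H /= => /(_ isT).
    rewrite /= !inE !negb_or n12 eq_sym n31 eq_sym n41 eq_sym n32 eq_sym n42 n34 c12 c34 /=.
    rewrite card_gt0 => /negP []; apply/set0Pn; exists x; by rewrite inE x12 xe.
  have := noC [:: e1; e2; e4; e3] erefl; rewrite /= e1H e2H e3H e4H /= => /(_ isT).
  rewrite /= !inE !negb_or n12 eq_sym n41 eq_sym n31 eq_sym n42 eq_sym n32 eq_sym n34 c12 setIC c34 /=.
  rewrite card_gt0 => /negP []; apply/set0Pn; exists x; by rewrite inE x12 xe.
- rewrite leqNgt; apply/negP => c3.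
  have : 0 < #|clusters H| by apply: leq_trans c3.
  rewrite card_gt0 => /set0Pn[C1 C1i].
  have : 0 < #|clusters H :\ C1|.
    move: c3; rewrite [#|clusters H|](cardsD1 C1) C1i; lia.
  rewrite card_gt0 => /set0Pn[C2]; rewrite !inE => /andP[C21 C2i].
  have : 0 < #|(clusters H :\ C1) :\ C2|.
    move: c3; rewrite [#|clusters H|](cardsD1 C1) C1i [#|clusters H :\ C1|](cardsD1 C2) !inE C21 C2i; lia.
  rewrite card_gt0 => /set0Pn[C3]; rewrite !inE => /and3P[C32 C31 C3i].
  have C12 : C1 != C2 by rewrite eq_sym.
  have C13 : C1 != C3 by rewrite eq_sym.
  have C23 : C2 != C3 by rewrite eq_sym.
  move: C1i C2i C3i.
  move=> /(cluster_form noB) [a1 [b1 [l1 C1e C1s]]].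
  move=> /(cluster_form noB) [a2 [b2 [l2 C2e C2s]]].
  move=> /(cluster_form noB) [a3 [b3 [l3 C3e C3s]]].
  have a1C : a1 \in compH H a1 by rewrite -C1e C1s !inE eqxx.
  have b1C : b1 \in compH H a1 by rewrite -C1e C1s !inE eqxx orbT.
  have a2C : a2 \in compH H a2 by rewrite -C2e C2s !inE eqxx.
  have b2C : b2 \in compH H a2 by rewrite -C2e C2s !inE eqxx orbT.
  have a3C : a3 \in compH H a3 by rewrite -C3e C3s !inE eqxx.
  have b3C : b3 \in compH H a3 by rewrite -C3e C3s !inE eqxx orbT.
  rewrite C1e C2e C3e in C12 C13 C23.
  have C21' : compH H a2 != compH H a1 by rewrite eq_sym.
  have C31' : compH H a3 != compH H a1 by rewrite eq_sym.
  have C32' : compH H a3 != compH H a2 by rewrite eq_sym.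
  have /and3P[a1H b1H c1] := l1; have /and3P[a2H b2H c2] := l2; have /and3P[a3H b3H c3'] := l3.
  have := noD [:: a1; b1; a2; b2; a3; b3] erefl.
  rewrite /= a1H b1H a2H b2H a3H b3H /= => /(_ isT).
  rewrite /= c1 c2 c3' !andbT !inE !negb_or.
  have n1 := lk_neq l1; have n2 := lk_neq l2; have n3 := lk_neq l3.
  by rewrite n1 n2 n3 !(neq_of a1C a2C) // !(neq_of a1C b2C) // !(neq_of a1C a3C) //
    !(neq_of a1C b3C) // !(neq_of b1C a2C) // !(neq_of b1C b2C) // !(neq_of b1C a3C) //
    !(neq_of b1C b3C) // !(neq_of a2C a3C) // !(neq_of a2C b3C) // !(neq_of b2C a3C) //
    !(neq_of b2C b3C).
Qed.

End Struct.

Lemma combine b nX N k Q mk c d : 0 < N ->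
  b * N ^ k <= nX * (Q * mk) -> nX * c <= N ^ k * d -> b * c <= Q * mk * d.
Proof.
move=> Np h1 h2.
have Nk : 0 < N ^ k by rewrite expn_gt0 Np.
rewrite -(leq_pmul2l Nk).
apply: (@leq_trans (nX * (Q * mk) * c)).
  by rewrite mulnA [N ^ k * b]mulnC leq_mul2r h1 orbT.
apply: (@leq_trans (N ^ k * d * (Q * mk))).
  by rewrite mulnAC leq_mul2r h2 orbT.
by apply: eq_leq; lia.
Qed.

Lemma Hrnm_HR n r m : Hrnm n r m = HR (Rr n r) m.
Proof.
apply/setP => H; rewrite !inE; congr (_ && _).
apply/forall_inP/subsetP => [h e eH|h e eH]; first by rewrite inE h.
by have := h e eH; rewrite inE.
Qed.

Lemma main_nat n r m : 3 <= r -> r <= n ->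
  #|Hrnm n r m :\: Hplus n r m| * n ^ 6 <=
  #|Hrnm n r m| * (m ^ 2 * r ^ 6 * n ^ 3 + m ^ 3 * r ^ 8 * n ^ 2
                   + 2 * m ^ 4 * r ^ 10 * n + m ^ 6 * r ^ 12).
Proof.
move=> hr rn.
set Q := #|Hrnm n r m|.
have Np : 0 < 'C(n, r) by rewrite bin_gt0.
have QE : Q = 'C(#|Rr n r|, m) by rewrite /Q Hrnm_HR /HR cards_draws.
pose b k P := \sum_(H in Hrnm n r m) cX r H k P.
have hbad : #|Hrnm n r m :\: Hplus n r m| <=
   b 2 (@PA n) + b 3 (@PB n) + b 4 (@PC n) + b 6 (@PD n).
  rewrite /b -!big_split /= -sum1_card.
  apply: (@leq_trans (\sum_(H in Hrnm n r m) (H \notin Hplus n r m : nat))).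
    rewrite (@sum_bool _ (Hrnm n r m) (fun H => H \notin Hplus n r m)).
    apply: eq_leq.
    by rewrite sum1_card; apply: eq_card => H; rewrite !inE andbC.
  apply: leq_sum => H HH; case: (boolP (H \in Hplus n r m)) => //= hp.
  exact: (bad_witness hr HH).
have pstep k (P : pred (seq {set 'I_n})) : (forall s, P s -> uniq s) -> b k P * 'C(n, r) ^ k <= nsum (Rr n r) k P * (Q * m ^ k).
  move=> Pu; rewrite /b Hrnm_HR -card_Rr QE; exact: prob_step.
have uA : forall s, @PA n s -> uniq s.
  by move=> s; rewrite /PA; case: s => [|e [|f [|g s]]] //; case/andP.
have uB : forall s, @PB n s -> uniq s.
  by move=> s; rewrite /PB; case: s => [|e [|f [|g [|h s]]]] //; case/and3P.
have uC : forall s, @PC n s -> uniq s.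
  by move=> s; rewrite /PC; case: s => [|e [|f [|g [|h [|i s]]]]] //; case/and4P.
have uD : forall s, @PD n s -> uniq s.
  by move=> s; rewrite /PD; case: s => [|e [|f [|g [|h [|i [|j [|k s]]]]]]] //; case/and4P.
have hA : b 2 (@PA n) * n ^ 3 <= Q * m ^ 2 * r ^ 6.
  apply: (combine Np (pstep _ _ uA)).
  apply: leq_trans (nA_bound n r) _; apply: eq_leq; lia.
have hB : b 3 (@PB n) * (n ^ 2 * n ^ 2) <= Q * m ^ 3 * r ^ 8.
  apply: (combine Np (pstep _ _ uB)).
  apply: leq_trans (nB_bound n r) _; apply: eq_leq; lia.
have hC : b 4 (@PC n) * ((n ^ 2 * n ^ 1) * n ^ 2) <= Q * m ^ 4 * (2 * r ^ 10).
  apply: (combine Np (pstep _ _ uC)).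
  apply: leq_trans (nC_bound n r) _; apply: eq_leq; lia.
have hD : b 6 (@PD n) * (n ^ 2 * (n ^ 2 * n ^ 2)) <= Q * m ^ 6 * r ^ 12.
  apply: (combine Np (pstep _ _ uD)).
  apply: leq_trans (nD_bound n r) _; apply: eq_leq; lia.
apply: leq_trans (leq_mul hbad (leqnn _)) _.
nia.
Qed.

From Stdlib Require Import Reals Lra.
Open Scope R_scope.
Lemma real_core (a rho t nu K : R) : 0 <= a -> 0 < rho -> 1 <= K -> t * t = nu ->
  2 * K * rho <= t -> a * rho <= 2 * K * t ->
  a^3*rho^8*nu^2 + 2*a^4*rho^10*nu + a^6*rho^12 <= (K + 2*K^2 + 4*K^4) * (a^2*rho^6*nu^3).
Proof.
intros a0 r0 K1 tn hrt hat.
rewrite <- tn.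
set w := a * rho.
have w0 : 0 <= w by unfold w; apply Rmult_le_pos; lra.
have t0 : 0 <= t by nra.
have r2 : 2 * rho <= t by nra.
have h1 : w * rho <= K * (t * t).
{ have := Rmult_le_compat _ _ _ _ w0 (ltac:(lra) : 0 <= 2 * rho) hat r2. intros H; nra. }
have h1' : 0 <= w * rho by apply Rmult_le_pos; lra.
have h2 : (w * rho)^2 <= (K * (t*t))^2 by apply pow_incr; lra.
have hw4 : w^4 <= (2*K*t)^4 by apply pow_incr; split; [lra|exact hat].
have hr2 : rho^2 <= (t/2)^2 by apply pow_incr; lra.
have h3 : w^4 * rho^2 <= (2*K*t)^4 * (t/2)^2.
{ apply Rmult_le_compat; try lra; apply pow_le; lra. }
have E1 : a^3*rho^8*(t*t)^2 + 2*a^4*rho^10*(t*t) + a^6*rho^12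
   = a^2*rho^6 * ((w*rho)*(t*t)^2 + 2*(w*rho)^2*(t*t) + w^4*rho^2) by (unfold w; ring).
rewrite E1.
have E2 : (K + 2*K^2 + 4*K^4) * (a^2*rho^6*(t*t)^3) =
   a^2*rho^6 * (K*(t*t)*(t*t)^2 + 2*(K*(t*t))^2*(t*t) + (2*K*t)^4*(t/2)^2) by field.
rewrite E2.
apply Rmult_le_compat_l.
{ apply Rmult_le_pos; apply pow_le; lra. }
have tt0 : 0 <= t * t by nra.
have := Rmult_le_compat_r _ _ _ (pow_le _ 2 tt0) h1.
have := Rmult_le_compat_r _ _ _ tt0 h2.
lra.
Qed.

Lemma ln_lt_self y : 0 < y -> ln y < y.
Proof.
intros hy; apply exp_lt_inv; rewrite exp_ln //.
have := exp_ineq1 y (ltac:(lra) : y <> 0); lra.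
Qed.

Lemma INR_muln a b : INR (a * b)%nat = INR a * INR b.
Proof. exact: mult_INR. Qed.
Lemma INR_addn a b : INR (a + b)%nat = INR a + INR b.
Proof. exact: plus_INR. Qed.
Lemma INR_expn a k : INR (expn a k) = INR a ^ k.
Proof. elim: k => [|k IH]; first by rewrite expn0. by rewrite expnS INR_muln IH. Qed.

Lemma bin_ge_n n r : (1 <= r)%nat -> (r < n)%nat -> (n <= 'C(n, r))%nat.
Proof.
move=> r1 rn; rewrite -(subnKC rn).
elim: (n - r.+1)%nat => [|d IH]; first by rewrite addn0 binSn.
case: r r1 {rn} IH => [|r] // _ IH.
rewrite addnS binS -add1n [('C(_, _) + _)%nat]addnC; apply: leq_add => //.
by rewrite bin_gt0; lia.
Qed.

Unset Implicit Arguments. Set Strict Implicit. Set Printing Implicit Defensive.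

Theorem theorem8p1 (r m : nat -> nat)
  (hr3 : forall n : nat, (3 <= r n)%nat)
  (hro : forall eps : R, 0 < eps ->
     exists N : nat, forall n : nat, (N <= n)%nat -> INR (r n) <= eps * sqrt (INR n))
  (hm1 : forall n : nat, (1 <= m n)%nat)
  (hmO : exists (K : R) (N : nat), forall n : nat, (N <= n)%nat ->
     INR (m n) <= K * ln (INR n / (INR (r n)) ^ 2)) :
  exists (C : R) (N : nat), forall n : nat, (N <= n)%nat ->
    Rabs (INR #|Hplus n (r n) (m n)| / INR #|Hrnm n (r n) (m n)| - 1)
      <= C * ((INR (r n)) ^ 6 * (INR (m n)) ^ 2 / (INR n) ^ 3).
Proof.
destruct hmO as [K [N1 hK]].
set K' := Rabs K + 1.
have K'1 : 1 <= K' by unfold K'; have := Rabs_pos K; lra.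
have KK' : K <= K' by unfold K'; have := Rle_abs K; lra.
destruct (hro (/(2*K'))) as [N2 hN2]; first (apply Rinv_0_lt_compat; lra).
exists (1 + (K' + 2*K'^2 + 4*K'^4)), (N1 + N2)%nat.
move=> n hn.
have hn1 : (N1 <= n)%nat by apply: leq_trans hn; apply: leq_addr.
have hn2 : (N2 <= n)%nat by apply: leq_trans hn; apply: leq_addl.
have hmK := hK n hn1; have hrn := hN2 n hn2; have r3 := hr3 n.
move: hmK hrn r3.
set rr := r n; set mm := m n => hmK hrn r3.
set rho := INR rr; set a := INR mm; set nu := INR n; set t := sqrt nu.
have rho3 : 3 <= rho.
{ have := le_INR _ _ (elimT leP r3); rewrite /rho. simpl; lra. }
have nu0 : 0 <= nu by apply pos_INR.
have tnu : t * t = nu by apply sqrt_sqrt.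
have t0 : 0 <= t by apply sqrt_pos.
have a0 : 0 <= a by apply pos_INR.
have hKr : 2 * K' * rho <= t.
{ have := Rmult_le_compat_l (2*K') rho (/(2*K') * t) (ltac:(lra)) hrn.
  replace (2*K' * (/(2*K') * t)) with t by (field; lra). done. }
have tpos : 6 <= t by nra.
have hx : nu / rho ^ 2 = (t / rho) * (t / rho) by rewrite -tnu; field; lra.
have tr0 : 0 < t / rho by apply Rdiv_lt_0_compat; lra.
have tr2 : 2 <= t / rho.
{ apply (Rmult_le_reg_r rho); first lra. unfold Rdiv; rewrite Rmult_assoc Rinv_l; nra. }
have lnx : ln (nu / rho ^ 2) <= 2 * (t / rho).
{ rewrite hx ln_mult //. have := ln_lt_self tr0. lra. }
have lnx0 : 0 <= ln (nu / rho ^ 2).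
{ rewrite hx -ln_1; apply Rlt_le, ln_increasing; nra. }
have har : a * rho <= 2 * K' * t.
{ have h1 : a <= K' * (2 * (t / rho)).
  { apply: Rle_trans hmK _. apply: Rle_trans (Rmult_le_compat_r _ _ _ lnx0 KK') _.
    apply Rmult_le_compat_l; lra. }
  have := Rmult_le_compat_r rho _ _ (ltac:(lra)) h1.
  replace (K' * (2 * (t / rho)) * rho) with (2 * K' * t) by (field; lra). done. }
have rltn : (rr < n)%nat.
{ apply/ltP; apply INR_lt; rewrite -/rho -/nu. nra. }
have rn : (rr <= n)%nat by apply: ltnW.
have mn : (mm <= n)%nat.
{ apply/leP; apply INR_le; rewrite -/a -/nu.
  have h1 : a * 3 <= a * rho by apply Rmult_le_compat_l; lra.
  have h2 : 2 * K' * 3 <= t by nra.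
  have h3 : (2 * K') * t <= (t / 3) * t by apply Rmult_le_compat_r; lra.
  lra. }
have mN : (mm <= 'C(n, rr))%nat.
  exact: leq_trans mn (bin_ge_n (leq_trans (isT : (1 <= 3)%nat) r3) rltn).
have M := main_nat mm (leq_trans (isT : (3 <= 3)%nat) r3) rn.
set Q := #|Hrnm n rr mm| in M *.
set bad := #|Hrnm n rr mm :\: Hplus n rr mm| in M *.
have Qpos : (0 < Q)%nat by rewrite /Q Hrnm_HR /HR cards_draws card_Rr bin_gt0.
have hpQ : #|Hplus n rr mm| = (Q - bad)%nat.
{ rewrite /bad cardsDS ?subKn ?subset_leq_card //;
  by apply/subsetP => H; rewrite inE => /andP[]. }
have bQ : (bad <= Q)%nat by rewrite /bad /Q subset_leq_card // subsetDl.
rewrite hpQ minus_INR; last by apply/leP.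
have MR := le_INR _ _ (elimT leP M).
rewrite !INR_muln !INR_addn !INR_muln in MR.
have QR : 0 < INR Q by apply lt_0_INR; apply/ltP.
have bR : 0 <= INR bad by apply pos_INR.
have nupos : 0 < nu by nra.
replace ((INR Q - INR bad) / INR Q - 1) with (- (INR bad / INR Q)) by (field; lra).
rewrite Rabs_Ropp Rabs_right; last by apply Rle_ge; unfold Rdiv; apply Rmult_le_pos; [lra|apply Rlt_le, Rinv_0_lt_compat; lra].
have core := real_core a0 (ltac:(lra) : 0 < rho) K'1 tnu hKr har.
set X := K' + 2*K'^2 + 4*K'^4 in core *.
set P := (a^2*rho^6*nu^3 + a^3*rho^8*nu^2 + INR 2*a^4*rho^10*nu + a^6*rho^12).
have MR' : INR bad * nu ^ 6 <= INR Q * P.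
{ eapply Rle_trans; [|eapply Rle_trans; [exact MR|]]; right; rewrite /P /nu /rho /a; ring. }
have hP : P <= (1 + X) * (rho^6 * a^2 * nu^3).
{ have E : (1 + X) * (rho^6*a^2*nu^3) = a^2*rho^6*nu^3 + X*(a^2*rho^6*nu^3) by ring.
  rewrite E /P. replace (INR 2) with 2 by (simpl; lra). lra. }
have n6 : 0 < nu ^ 6 by apply pow_lt.
have n3 : 0 < nu ^ 3 by apply pow_lt.
apply (Rmult_le_reg_r (INR Q * nu ^ 6)); first by apply Rmult_lt_0_compat.
replace (INR bad / INR Q * (INR Q * nu ^ 6)) with (INR bad * nu ^ 6) by (field; lra).
apply: Rle_trans MR' _.
replace ((1 + X) * (rho ^ 6 * a ^ 2 / nu ^ 3) * (INR Q * nu ^ 6))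
  with (INR Q * ((1 + X) * (rho^6 * a^2 * nu^3))) by (field; lra).
apply Rmult_le_compat_l; lra.
Qed.
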